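(* Consider wealth dynamics without a wealth tax, $\mathrm{d} w_{it} = \mu(w_{it})\,\mathrm{d} t + \sigma(w_{it})\,\mathrm{d} B_{it}$, and with a (nonlinear) wealth tax $\tau(w)$ and no behavioral responses, $\mathrm{d} w_{it} = (\mu(w_{it}) - \tau(w_{it}))\,\mathrm{d} t + \sigma(w_{it})\,\mathrm{d} B_{it}$, where $B_{it}$ is a standard Brownian motion. Let $f$ be the steady-state density of wealth without the wealth tax and $f^*$ the steady-state density with the wealth tax. Then $f^*$ equals $f$ reweighted by a factor $\theta(w)$: $$f^*(w) \propto \theta(w) f(w), \qquad \theta(w) = \exp\left\{-\int_{-\infty}^w \frac{2\tau(s)}{\sigma^2(s)}\,\mathrm{d} s\right\}.$$ In particular, if $\tau(w) = \tau\,(w-w_0)_+$ for a constant rate $\tau$ and threshold $w_0>0$ (where $(x)_+=\max(x,0)$), and if $\sigma(w) = \sigma w$ for $w \ge w_0$ with a constant $\sigma>0$, then $$\theta(w)=\exp\left\{-\frac{2\tau}{\sigma^2}\left(\frac{w_0}{w}-1\right)\right\}\left(\frac{w}{w_0}\right)^{-2\tau/\sigma^2} \quad \text{for all } w>w_0,$$ and $\theta(w) = 1$ otherwise.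
   Context: Here $\tau(w)$ denotes the amount of tax paid per unit of time by someone with wealth $w$, $\mu(w)$ the (time-invariant) drift and $\sigma^2(w)$ the (time-invariant) diffusion of wealth. A steady-state density is a probability density $f$ that is a stationary solution of the Kolmogorov forward equation associated with the SDE, i.e. $0 = -\partial_w[\text{drift}(w) f(w)] + \tfrac12 \partial_w^2[\sigma^2(w) f(w)]$. The symbol $\propto$ means equality up to a positive normalizing constant. *)

(* Defs.v *)
From Stdlib Require Import Reals.
From Coquelicot Require Import Coquelicot.
Open Scope R_scope.

Definition prob_density (f : R -> R) : Prop :=
  (forall w, 0 <= f w) /\
  is_RInt_gen f (Rbar_locally m_infty) (Rbar_locally p_infty) 1.

(* Stationary Kolmogorov forward equation for dw = drift(w) dt + sig(w) dB:
   0 = - d/dw [drift f] + 1/2 d^2/dw^2 [sig^2 f], required at every w. *)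
Definition stationary_KFE (drift sig f : R -> R) : Prop :=
  (forall w, ex_derive (fun x => drift x * f x) w) /\
  (forall w, ex_derive (fun x => sig x ^ 2 * f x) w) /\
  (forall w, ex_derive (Derive (fun x => sig x ^ 2 * f x)) w) /\
  (forall w, 0 = - Derive (fun x => drift x * f x) w
                 + / 2 * Derive_n (fun x => sig x ^ 2 * f x) 2 w).

Definition steady_state_density (drift sig f : R -> R) : Prop :=
  prob_density f /\ stationary_KFE drift sig f.

(* Probability flux J(w) = - drift f + 1/2 (sig^2 f)'; the stationary KFE says J' = 0. *)
Definition flux (drift sig f : R -> R) (w : R) : R :=
  - drift w * f w + / 2 * Derive (fun x => sig x ^ 2 * f x) w.

Definition no_flux_at_minus_infty (drift sig f : R -> R) : Prop :=
  is_lim (flux drift sig f) m_infty 0.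

Definition theta (tau sig : R -> R) (w : R) : R :=
  exp (- RInt_gen (fun s => 2 * tau s / sig s ^ 2) (Rbar_locally m_infty) (at_point w)).

(* Main.v *)
Require Import Defs.
From Stdlib Require Import Reals Lra FunctionalExtensionality.
From Coquelicot Require Import Coquelicot.
Open Scope R_scope.

Lemma const_of_deriv0 (h : R -> R) :
  (forall x, is_derive h x 0) -> forall w, h w = h 0.
Proof.
  intros H w.
  pose proof (is_RInt_derive h (fun _ => 0) 0 w (fun x _ => H x)
               (fun x _ => continuous_const 0 x)) as H1.
  pose proof (is_RInt_const 0 w 0) as H2.
  apply (@is_RInt_unique R_CompleteNormedModule) in H1. apply (@is_RInt_unique R_CompleteNormedModule) in H2.
  rewrite H1 in H2. change (scal (w - 0) 0) with ((w-0)*0) in H2.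
  change (minus (h w) (h 0)) with (h w - h 0) in H2.
  change (@zero R_NormedModule) with 0 in H2. lra.
Qed.

Lemma RInt_deriv (a : R -> R) : (forall x, continuous a x) ->
  forall x, is_derive (fun y => RInt a 0 y) x (a x).
Proof.
  intros Ha x. apply (is_derive_RInt a _ 0).
  - apply filter_forall. intro y. apply (@RInt_correct R_CompleteNormedModule), (@ex_RInt_continuous R_CompleteNormedModule). auto.
  - auto.
Qed.

Lemma ode (a g : R -> R) : (forall x, continuous a x) ->
  (forall x, is_derive g x (a x * g x)) ->
  forall w, g w = g 0 * exp (RInt a 0 w).
Proof.
  intros Ha Hg.
  set (h := fun y => g y * exp (- RInt a 0 y)).
  assert (Hh : forall x, is_derive h x 0).
  { intro x.
    assert (E : is_derive (fun y => exp (- RInt a 0 y)) x (- a x * exp (- RInt a 0 x))).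
    { apply (is_derive_comp exp (fun y => - RInt a 0 y) x (exp (- RInt a 0 x)) (- a x)).
      - apply is_derive_Reals, derivable_pt_lim_exp.
      - apply (is_derive_opp (fun y => RInt a 0 y)). apply RInt_deriv; auto. }
    pose proof (is_derive_mult g _ x _ _ (Hg x) E ltac:(intros; apply Rmult_comm)) as M.
    replace 0 with (plus (mult (a x * g x) (exp (- RInt a 0 x))) (mult (g x) (- a x * exp (- RInt a 0 x)))).
    exact M.
    unfold plus, mult; simpl; ring. }
  intro w. pose proof (const_of_deriv0 h Hh w) as E. unfold h in E.
  rewrite RInt_point in E. change (- zero) with (-0) in E.
  rewrite Ropp_0, exp_0, Rmult_1_r in E. rewrite <- E.
  rewrite Rmult_assoc, <- exp_plus. replace (- RInt a 0 w + RInt a 0 w) with 0 by ring.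
  rewrite exp_0; ring.
Qed.

Lemma cont_ratio (d sig : R -> R) : (forall w, continuous d w) -> (forall w, continuous sig w) ->
  (forall w, sig w <> 0) -> forall w, continuous (fun s => 2 * d s / sig s ^ 2) w.
Proof.
  intros Hd Hs Hn w.
  apply (continuous_ext (fun s => (2 * (d s)) * (/ ((sig s) * (sig s))))).
  { intro s. unfold Rdiv. simpl. rewrite Rmult_1_r. reflexivity. }
  apply (continuous_mult (K:=R_AbsRing)). apply (continuous_mult (K:=R_AbsRing)). apply continuous_const. auto.
  apply continuous_Rinv_comp. apply (continuous_mult (K:=R_AbsRing)); auto.
  apply Rmult_integral_contrapositive; auto.
Qed.

Lemma no_zero_density (f : R -> R) : (forall w, f w = 0) ->
  is_RInt_gen f (Rbar_locally m_infty) (Rbar_locally p_infty) 1 -> False.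
Proof.
  intros H0 H.
  pose proof (is_RInt_gen_scal (Fa := Rbar_locally m_infty) (Fb := Rbar_locally p_infty) f 0 1 H) as H'.
  match type of H' with is_RInt_gen ?F _ _ _ => assert (E : F = f) end.
  { apply functional_extensionality. intro y. rewrite H0. apply Rmult_0_r. }
  rewrite E in H'.
  apply (is_RInt_gen_unique (Fa := Rbar_locally m_infty) (Fb := Rbar_locally p_infty)
     (V := R_CompleteNormedModule)) in H; try apply Proper_StrongProper, Rbar_locally_filter.
  apply (is_RInt_gen_unique (Fa := Rbar_locally m_infty) (Fb := Rbar_locally p_infty)
     (V := R_CompleteNormedModule)) in H'; try apply Proper_StrongProper, Rbar_locally_filter.
  rewrite H in H'. change (scal 0 1) with (0 * 1) in H'. lra.
Qed.

Lemma ss_formula (d sig f : R -> R) : (forall w, continuous d w) -> (forall w, continuous sig w) ->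
  (forall w, sig w <> 0) -> steady_state_density d sig f -> no_flux_at_minus_infty d sig f ->
  0 < sig 0 ^ 2 * f 0 /\
  forall w, f w = (sig 0 ^ 2 * f 0) * exp (RInt (fun s => 2 * d s / sig s ^ 2) 0 w) / sig w ^ 2.
Proof.
  intros Hd Hs Hn [[Hpos Hint] [Hd1 [Hd2 [Hd3 Hk]]]] Hflux.
  set (g := fun x => sig x ^ 2 * f x).
  assert (HJ : forall x, is_derive (flux d sig f) x 0).
  { intro x.
    pose proof (Derive_correct _ _ (Hd1 x)) as D1.
    pose proof (Derive_correct _ _ (Hd3 x)) as D2.
    pose proof (is_derive_plus _ _ x _ _ (is_derive_opp _ x _ D1) (is_derive_scal _ x (/2) _ D2)) as D.
    replace 0 with (plus (opp (Derive (fun x0 : R => d x0 * f x0) x))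
         (/ 2 * Derive (Derive (fun x0 : R => sig x0 ^ 2 * f x0)) x)).
    - apply (is_derive_ext _ _ x _ ) with (2 := D). intro t. unfold flux, plus, opp; simpl. ring.
    - rewrite (Hk x). unfold plus, opp; simpl. reflexivity. }
  assert (HJ0 : forall x, flux d sig f x = 0).
  { intro x. rewrite (const_of_deriv0 _ HJ x).
    pose proof (is_lim_ext _ (fun _ => flux d sig f 0) m_infty 0 (const_of_deriv0 _ HJ) Hflux) as L.
    apply is_lim_unique in L. rewrite Lim_const in L. injection L. auto. }
  assert (Hg : forall x, is_derive g x ((fun s => 2 * d s / sig s ^ 2) x * g x)).
  { intro x. pose proof (Derive_correct _ _ (Hd2 x)) as D.
    replace ((fun s => 2 * d s / sig s ^ 2) x * g x) with (Derive (fun x0 : R => sig x0 ^ 2 * f x0) x).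
    exact D.
    pose proof (HJ0 x) as E. unfold flux in E. unfold g.
    assert (sig x ^ 2 <> 0) by (apply pow_nonzero; auto).
    replace (2 * d x / sig x ^ 2 * (sig x ^ 2 * f x)) with (2 * d x * f x) by (field; auto). lra. }
  pose proof (ode _ g (cont_ratio d sig Hd Hs Hn) Hg) as Hode.
  assert (Hf : forall w, f w = g w / sig w ^ 2).
  { intro w. unfold g. field; auto. }
  split.
  - assert (0 <= g 0). { unfold g. apply Rmult_le_pos; auto. apply pow2_ge_0. }
    destruct H as [H | H]. exact H. exfalso.
    apply (no_zero_density f); auto. intro w. rewrite Hf, Hode, <- H. unfold Rdiv. ring.
  - intro w. rewrite Hf, Hode. reflexivity.
Qed.
Lemma theta_split (tau sig : R -> R) w :
  (forall w, ex_RInt_gen (fun s => 2 * tau s / sig s ^ 2) (Rbar_locally m_infty) (at_point w)) ->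
  (forall w, continuous (fun s => 2 * tau s / sig s ^ 2) w) ->
  theta tau sig w =
  exp (- RInt_gen (fun s => 2 * tau s / sig s ^ 2) (Rbar_locally m_infty) (at_point 0))
  * exp (- RInt (fun s => 2 * tau s / sig s ^ 2) 0 w).
Proof.
  intros Hex Hc. unfold theta.
  assert (Ei : ex_RInt (fun s => 2 * tau s / sig s ^ 2) 0 w).
  { apply (@ex_RInt_continuous R_CompleteNormedModule). auto. }
  pose proof (RInt_gen_Chasles (V := R_CompleteNormedModule) (Fa := Rbar_locally m_infty) (Fc := at_point w)
     (fun s => 2 * tau s / sig s ^ 2) 0 (Hex 0)
     (proj2 (ex_RInt_gen_at_point _ _ _) Ei)) as C.
  rewrite <- C; try apply Proper_StrongProper; try apply Rbar_locally_filter; try apply at_point_filter.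
  rewrite (RInt_gen_at_point _ _ _ Ei).
  change (plus ?u ?v) with (u + v). rewrite Ropp_plus_distr, exp_plus. reflexivity.
Qed.

Lemma general_part : forall (mu sigma tau f fstar : R -> R),
      (forall w, continuous mu w) ->
      (forall w, continuous sigma w) ->
      (forall w, continuous tau w) ->
      (forall w, sigma w <> 0) ->
      (forall w, ex_RInt_gen (fun s => 2 * tau s / sigma s ^ 2)
                             (Rbar_locally m_infty) (at_point w)) ->
      steady_state_density mu sigma f ->
      no_flux_at_minus_infty mu sigma f ->
      steady_state_density (fun w => mu w - tau w) sigma fstar ->
      no_flux_at_minus_infty (fun w => mu w - tau w) sigma fstar ->
      exists c : R, 0 < c /\ forall w, fstar w = c * (theta tau sigma w * f w).
Proof.
  intros mu sigma tau f fstar Hmu Hs Ht Hn Hex Hf Hff Hfs Hffs.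
  assert (Hmt : forall w, continuous (fun w => mu w - tau w) w).
  { intro w. apply (continuous_minus (V := R_NormedModule)); auto. }
  destruct (ss_formula mu sigma f Hmu Hs Hn Hf Hff) as [P1 F1].
  destruct (ss_formula _ sigma fstar Hmt Hs Hn Hfs Hffs) as [P2 F2].
  set (I0 := RInt_gen (fun s => 2 * tau s / sigma s ^ 2) (Rbar_locally m_infty) (at_point 0)).
  exists (sigma 0 ^ 2 * fstar 0 / (sigma 0 ^ 2 * f 0) * exp I0).
  split.
  { apply Rmult_lt_0_compat. apply Rdiv_lt_0_compat; auto. apply exp_pos. }
  intro w.
  rewrite (theta_split tau sigma w Hex (cont_ratio tau sigma Ht Hs Hn)). fold I0.
  rewrite (F2 w), (F1 w).
  assert (Ea : ex_RInt (fun s => 2 * mu s / sigma s ^ 2) 0 w).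
  { apply (@ex_RInt_continuous R_CompleteNormedModule). intros; apply cont_ratio; auto. }
  assert (Eb : ex_RInt (fun s => 2 * tau s / sigma s ^ 2) 0 w).
  { apply (@ex_RInt_continuous R_CompleteNormedModule). intros; apply cont_ratio; auto. }
  assert (ER : RInt (fun s => 2 * (mu s - tau s) / sigma s ^ 2) 0 w =
     RInt (fun s => 2 * mu s / sigma s ^ 2) 0 w - RInt (fun s => 2 * tau s / sigma s ^ 2) 0 w).
  { etransitivity; [| exact (RInt_minus _ _ _ _ Ea Eb)].
    apply RInt_ext. intros x _. unfold minus, plus, opp; simpl. field. auto. }
  rewrite ER.
  unfold Rminus. rewrite exp_plus, exp_Ropp, exp_Ropp.
  assert (exp I0 <> 0) by (apply Rgt_not_eq, exp_pos).
  assert (exp (RInt (fun s => 2 * tau s / sigma s ^ 2) 0 w) <> 0) by (apply Rgt_not_eq, exp_pos).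
  assert (sigma w <> 0) by auto.
  field. repeat split; auto. intro Hz; rewrite Hz, Rmult_0_r in P1; lra.
Qed.
Lemma zero_part (tau0 w0 : R) (tau sigma : R -> R) w :
  (forall w, tau w = tau0 * Rmax (w - w0) 0) -> w <= w0 ->
  is_RInt_gen (fun s => 2 * tau s / sigma s ^ 2) (Rbar_locally m_infty) (at_point w) 0.
Proof.
  intros Ht Hw.
  assert (D : is_RInt_gen (Derive (fun _ : R => 0)) (Rbar_locally m_infty) (at_point w) (0 - 0)).
  { apply (is_RInt_gen_Derive (Fa := Rbar_locally m_infty) (Fb := at_point w)).
    - apply filter_forall. intros ab x _. apply ex_derive_const.
    - apply filter_forall. intros ab x _.
      apply (continuous_ext (fun _ => 0)). intro; rewrite Derive_const; reflexivity.
      apply continuous_const.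
    - apply filterlim_const.
    - apply filterlim_const. }
  replace 0 with (0 - 0) by ring.
  apply (is_RInt_gen_ext (Fa := Rbar_locally m_infty) (Fb := at_point w)) with (2 := D).
  apply (Filter_prod _ _ _ (fun a => a < w) (fun y => y = w)).
  - exists w. auto.
  - reflexivity.
  - intros a y Ha Hy x Hx. simpl in Hx. subst y.
    rewrite Rmin_left in Hx by lra. rewrite Rmax_right in Hx by lra.
    rewrite Derive_const, Ht, Rmax_right by lra. rewrite !Rmult_0_r. unfold Rdiv. rewrite Rmult_0_l. reflexivity.
Qed.

Lemma special_part : forall (tau0 w0 sigma0 : R) (tau sigma : R -> R),
      0 < w0 -> 0 < sigma0 ->
      (forall w, tau w = tau0 * Rmax (w - w0) 0) ->
      (forall w, w0 <= w -> sigma w = sigma0 * w) ->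
      forall w,
        (w0 < w ->
           theta tau sigma w =
           exp (- (2 * tau0 / sigma0 ^ 2) * (w0 / w - 1))
           * Rpower (w / w0) (- (2 * tau0 / sigma0 ^ 2))) /\
        (w <= w0 -> theta tau sigma w = 1).
Proof.
  intros tau0 w0 sigma0 tau sigma Hw0 Hs0 Ht Hs w. split.
  - intro Hw.
    set (k := 2 * tau0 / sigma0 ^ 2).
    assert (L : is_RInt (fun s => 2 * tau s / sigma s ^ 2) w0 w
                 (minus (k * (ln w + w0 / w)) (k * (ln w0 + w0 / w0)))).
    { apply (is_RInt_ext (fun s => k * (/ s - w0 / s ^ 2))).
      { intros x Hx. rewrite Rmin_left in Hx by lra. rewrite Rmax_right in Hx by lra.
        assert (E : k * (/ x - w0 / x ^ 2) = 2 * tau x / sigma x ^ 2 :> R).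
        { rewrite Ht, Hs by lra. rewrite Rmax_left by lra. unfold k.
          field. split; lra. }
        exact E. }
      apply (is_RInt_derive (fun s => k * (ln s + w0 / s))).
      - intros x Hx. rewrite Rmin_left in Hx by lra. rewrite Rmax_right in Hx by lra.
        auto_derive; [repeat split; lra | field; lra].
      - intros x Hx. rewrite Rmin_left in Hx by lra. rewrite Rmax_right in Hx by lra.
        assert (X : ex_derive (fun s => k * (/ s - w0 / s ^ 2)) x) .
        { auto_derive. split; [lra | split; [intro Hz; nra | trivial]]. }
        exact (@ex_derive_continuous R_AbsRing R_NormedModule _ x X). }
    pose proof (is_RInt_gen_Chasles (Fa := Rbar_locally m_infty) (Fc := at_point w) _ w0 _ _
                  (zero_part tau0 w0 tau sigma w0 Ht (Rle_refl _))
                  (proj2 (is_RInt_gen_at_point _ _ _ _) L)) as C.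
    unfold theta.
    rewrite (is_RInt_gen_unique (V := R_CompleteNormedModule) _ _ C);
      try apply Proper_StrongProper; try apply Rbar_locally_filter; try apply at_point_filter.
    change (plus 0 (minus ?u ?v)) with (0 + (u - v)).
    unfold Rpower. rewrite <- exp_plus. f_equal. rewrite ln_div by lra.
    replace (w0 / w0) with 1 by (field; lra). fold k. ring.
  - intro Hw. unfold theta.
    rewrite (is_RInt_gen_unique (V := R_CompleteNormedModule) _ _ (zero_part tau0 w0 tau sigma w Ht Hw));
      try apply Proper_StrongProper; try apply Rbar_locally_filter; try apply at_point_filter.
    rewrite Ropp_0. apply exp_0.
Qed.
Theorem proposition2 :
  (* General case: f* is f reweighted by theta. *)
  (forall (mu sigma tau f fstar : R -> R),
      (forall w, continuous mu w) ->
      (forall w, continuous sigma w) ->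
      (forall w, continuous tau w) ->
      (forall w, sigma w <> 0) ->
      (forall w, ex_RInt_gen (fun s => 2 * tau s / sigma s ^ 2)
                             (Rbar_locally m_infty) (at_point w)) ->
      steady_state_density mu sigma f ->
      no_flux_at_minus_infty mu sigma f ->
      steady_state_density (fun w => mu w - tau w) sigma fstar ->
      no_flux_at_minus_infty (fun w => mu w - tau w) sigma fstar ->
      exists c : R, 0 < c /\ forall w, fstar w = c * (theta tau sigma w * f w))
  /\
  (* Special case: linear tax above a threshold, sigma(w) = sigma0 * w above it. *)
  (forall (tau0 w0 sigma0 : R) (tau sigma : R -> R),
      0 < w0 -> 0 < sigma0 ->
      (forall w, tau w = tau0 * Rmax (w - w0) 0) ->
      (forall w, w0 <= w -> sigma w = sigma0 * w) ->
      forall w,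
        (w0 < w ->
           theta tau sigma w =
           exp (- (2 * tau0 / sigma0 ^ 2) * (w0 / w - 1))
           * Rpower (w / w0) (- (2 * tau0 / sigma0 ^ 2))) /\
        (w <= w0 -> theta tau sigma w = 1)).
Proof.
  split; [exact general_part | exact special_part].
Qed.
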